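(* Every Move-To-Front-Every-Other-Access algorithm $A$ (for any choice of initial bits) has competitive ratio at most $2.5$: there is a constant $b$ (depending only on the list length) such that $A(\sigma)\le 2.5\cdot\mathrm{OPT}(\sigma)+b$ for every request sequence $\sigma$, in both the partial and the full cost model.
   Context: Static list update: a list of $l$ distinct items in some initial order; serving a request to the item at position $i$ (from the front) costs $i$ in the full cost model and $i-1$ in the partial cost model; the accessed item may be moved closer to the front for free (free exchange); two adjacent items may be swapped at cost $1$ (paid exchange). $A(\sigma)$ is the total cost of algorithm $A$ and $\mathrm{OPT}(\sigma)$ the minimum cost of any offline algorithm from the same initial list (in the same cost model). A Move-To-Front-Every-Other-Access (MTF2) algorithm maintains one bit per item, with arbitrary initial values; on each request to an item $z$ it flips the bit of $z$, and if the bit becomes $0$ it moves $z$ to the front (free exchange), otherwise it leaves the list unchanged; it makes no paid exchanges. *)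

(* Defs.v *)
From HB Require Import structures.
From mathcomp Require Import all_boot all_order all_algebra.
From Stdlib Require Import ClassicalEpsilon.
Set Implicit Arguments. Unset Strict Implicit. Unset Printing Implicit Defensive.

Section ListUpdate.
Variable T : eqType.

(* Cost of serving a request to x in list L: position from the front is
   index x L + 1; full model pays that, partial model pays one less. *)
Definition access_cost (full : bool) (x : T) (L : seq T) : nat :=
  index x L + full.

(* Paid exchange: swap the items at (0-based) positions j and j+1
   (no-op if position j+1 does not exist; still costs 1). *)
Definition swap_adj (L : seq T) (j : nat) : seq T :=
  match drop j L with
  | a :: b :: r => take j L ++ b :: a :: r
  | _ => L
  end.

Definition move_to (x : T) (k : nat) (L : seq T) : seq T :=
  let L' := rem x L in take k L' ++ x :: drop k L'.

(* An offline step: a list of paid adjacent exchanges performed before the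
   access, and a target position k for the free exchange after the access
   (the accessed item goes to position min k (its current position), i.e.
   it can only be moved closer to the front). *)
Definition step := (seq nat * nat)%type.

Fixpoint off_cost (full : bool) (S : nat -> step) (t : nat) (L : seq T)
    (sigma : seq T) : nat :=
  match sigma with
  | [::] => 0
  | x :: sigma' =>
      let L1 := foldl swap_adj L (S t).1 in
      size (S t).1 + access_cost full x L1 +
      off_cost full S t.+1 (move_to x (minn (S t).2 (index x L1)) L1) sigma'
  end.

Definition achievable (full : bool) (L : seq T) (sigma : seq T) (n : nat) : Prop :=
  exists S : nat -> step, off_cost full S 0 L sigma = n.

Definition achievableb full L sigma (n : nat) : bool :=
  if excluded_middle_informative (achievable full L sigma n) then true else false.

Lemma achievable_exists full L sigma : exists n, achievableb full L sigma n.
Proof.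
exists (off_cost full (fun _ => ([::], 0)) 0 L sigma).
rewrite /achievableb; case: excluded_middle_informative => // H.
by exfalso; apply: H; exists (fun _ => ([::], 0)).
Qed.

Definition OPT (full : bool) (L : seq T) (sigma : seq T) : nat :=
  ex_minn (achievable_exists full L sigma).

Fixpoint mtf2_cost (full : bool) (L : seq T) (bits : T -> bool)
    (sigma : seq T) : nat :=
  match sigma with
  | [::] => 0
  | x :: sigma' =>
      let b := ~~ bits x in
      let bits' := fun y => if y == x then b else bits y in
      access_cost full x L +
      mtf2_cost full (if b then L else move_to x 0 L) bits' sigma'
  end.

End ListUpdate.

(* Main.v *)
Require Import Defs.
From HB Require Import structures.
From mathcomp Require Import all_boot all_order all_algebra.
From mathcomp Require Import zify lra.
From Stdlib Require Import ClassicalEpsilon.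
Set Implicit Arguments. Unset Strict Implicit. Unset Printing Implicit Defensive.

Section Aux.
Variable T : eqType.
Implicit Types (L s : seq T) (x y z w : T).

Definition bef L x y : bool := index x L < index y L.

Lemma sum_index_lt L k : uniq L ->
  \sum_(w <- L) (index w L < k : nat) = minn k (size L).
Proof.
elim: L k => [|a L IH] k /=; first by rewrite big_nil minn0.
case/andP => aL uL; rewrite big_cons /= eqxx.
have -> : \sum_(w <- L) (index w (a :: L) < k : nat) =
          \sum_(w <- L) (index w L < k.-1 : nat).
  rewrite big_seq_cond [RHS]big_seq_cond; apply: eq_bigr => w /andP[wL _] /=.
  have aw : (a == w) = false by apply/eqP => E; rewrite E wL in aL.
  by rewrite aw; case: k.
rewrite IH //; case: k => [|k] //=; lia.
Qed.

Lemma index_sum L0 L z : uniq L -> perm_eq L L0 -> z \in L ->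
  index z L = \sum_(w <- L0) (bef L w z : nat).
Proof.
move=> uL pL zL; rewrite -(perm_big _ pL) /bef sum_index_lt //.
by apply/esym/minn_idPl/ltnW; rewrite index_mem.
Qed.

Lemma move_to_dec z k L : uniq L -> z \in L -> k <= index z L ->
  exists L1 L2 L3, [/\ L = L1 ++ L2 ++ z :: L3, move_to z k L = L1 ++ z :: L2 ++ L3,
     z \notin L1, z \notin L2 & size L1 = k].
Proof.
move=> uL zL kp.
set p := index z L.
have pL : p < size L by rewrite index_mem.
have EL : L = take p L ++ z :: drop p.+1 L.
  by rewrite -{1}(cat_take_drop p L) (drop_nth z pL) nth_index.
have zA : z \notin take p L.
  by move: uL; rewrite {1}EL cat_uniq /= => /and3P[_ /norP[] ].
exists (take k (take p L)), (drop k (take p L)), (drop p.+1 L).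
have sA : size (take p L) = p by rewrite size_take pL.
split.
- by rewrite catA cat_take_drop.
- rewrite /move_to remE -/p take_cat drop_cat sA.
  case: ltnP => kp'.
    by [].
  have -> : k = p by apply/eqP; rewrite eqn_leq kp kp'.
  by rewrite subnn take0 drop0 cats0 (take_oversize (s := take p L)) ?sA // (drop_oversize (s := take p L)) ?sA.
- by apply: contra zA; apply: mem_take.
- by apply: contra zA; apply: mem_drop.
- by rewrite size_take sA; case: ltnP => // h; apply/eqP; rewrite eqn_leq h kp.
Qed.


Lemma idx3 L1 L2 L3 z x : x != z ->
  index x (L1 ++ L2 ++ z :: L3) =
  if index x L1 < size L1 then index x L1 else size L1 +
   (if index x L2 < size L2 then index x L2 else size L2 + (index x L3).+1).
Proof.
move=> xz; rewrite !index_cat !index_mem /=.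
by rewrite eq_sym (negbTE xz).
Qed.

Lemma idx3' L1 L2 L3 z x : x != z ->
  index x (L1 ++ z :: L2 ++ L3) =
  if index x L1 < size L1 then index x L1 else size L1 +
   (if index x L2 < size L2 then index x L2 else size L2 + (index x L3)).+1.
Proof.
move=> xz; rewrite index_cat /= eq_sym (negbTE xz) index_cat !index_mem.
by case: ifP.
Qed.

Lemma move_bef L1 L2 L3 z : z \notin L1 -> z \notin L2 ->
  let L := L1 ++ L2 ++ z :: L3 in let L' := L1 ++ z :: L2 ++ L3 in
  [/\ forall x y, x != z -> y != z -> bef L' x y = bef L x y,
      forall w, w != z -> bef L z w -> bef L' z w,
      L1 = [::] -> forall w, w != z -> bef L' z w &
      perm_eq L' L].
Proof.
move=> zL1 zL2 L L'.
have iz : index z L = size L1 + size L2.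
  by rewrite /L !index_cat (negbTE zL1) (negbTE zL2) /= eqxx addn0.
have iz' : index z L' = size L1.
  by rewrite /L' !index_cat (negbTE zL1) /= eqxx addn0.
have b1 := index_size _ L1; have b2 := index_size _ L2.
split.
- move=> x y xz yz; rewrite /bef /L /L' !idx3 // !idx3' //.
  have := b1 x; have := b1 y; have := b2 x; have := b2 y.
  by repeat case: ifPn; lia.
- move=> w wz; rewrite /bef iz iz' /L /L' idx3 // idx3' //.
  have := b1 w; have := b2 w.
  by repeat case: ifPn; lia.
- move=> E w wz; rewrite /bef iz' /L' idx3' // E /=; lia.
- by rewrite /L /L' perm_cat2l -cat1s perm_catCA.
Qed.


Lemma swap_bef P a b r : uniq (P ++ a :: b :: r) ->
  let L := P ++ a :: b :: r in let L' := P ++ b :: a :: r in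
  [/\ forall x y, ~~ ((x == a) && (y == b)) -> ~~ ((x == b) && (y == a)) ->
        bef L' x y = bef L x y & perm_eq L' L].
Proof.
move=> U L L'; move: U; rewrite cat_uniq /= in_cons !negb_or => /and5P[_ /and3P[aP bP _] /andP[ab _] _ _].
have ba : b != a by rewrite eq_sym.
have ia : index a L = size P by rewrite /L index_cat (negbTE aP) /= eqxx addn0.
have ib : index b L = (size P).+1.
  by rewrite /L index_cat (negbTE bP) /= ?(negbTE ab) ?(negbTE ba) eqxx addn1.
have ia' : index a L' = (size P).+1.
  by rewrite /L' index_cat (negbTE aP) /= ?(negbTE ab) ?(negbTE ba) eqxx addn1.
have ib' : index b L' = size P by rewrite /L' index_cat (negbTE bP) /= eqxx addn0.
have io : forall x, x != a -> x != b -> index x L' = index x L /\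
   (index x L < size P \/ (size P).+1 < index x L).
  move=> x xa xb; rewrite /L /L' !index_cat /=.
  rewrite ![_ == x]eq_sym (negbTE xa) (negbTE xb).
  have := index_size x P; rewrite -index_mem; case: ifPn => h; lia.
split; last by rewrite /L /L' perm_cat2l; apply/permP => q /=; lia.
move=> x y nab nba; rewrite /bef.
have [Exa | xa] := eqVneq x a.
  rewrite Exa in nab nba *.
  have [-> | ya] := eqVneq y a; first by rewrite !ltnn.
  have [Eyb | yb] := eqVneq y b; first by rewrite Eyb !eqxx in nab.
  have [E2 H2] := io y ya yb; rewrite ia ia' E2; lia.
have [Exb | xb] := eqVneq x b.
  rewrite Exb in nab nba *.
  have [Eya | ya] := eqVneq y a; first by rewrite Eya !eqxx in nba.
  have [-> | yb] := eqVneq y b; first by rewrite !ltnn.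
  have [E2 H2] := io y ya yb; rewrite ib ib' E2; lia.
have [E1 H1] := io x xa xb.
have [-> | ya] := eqVneq y a; first by rewrite ia ia' E1; lia.
have [-> | yb] := eqVneq y b; first by rewrite ib ib' E1; lia.
have [E2 H2] := io y ya yb; by rewrite E1 E2.
Qed.

Lemma swap_adj_dec L j : uniq L ->
  swap_adj L j = L \/ exists P a b r, L = P ++ a :: b :: r /\ swap_adj L j = P ++ b :: a :: r.
Proof.
move=> _; rewrite /swap_adj.
case E: (drop j L) => [|a [|b r]]; try by left.
right; exists (take j L), a, b, r; split => //.
by rewrite -E cat_take_drop.
Qed.


Definition phi (inv bf bb : bool) : nat := if inv then 4 + bf - 2 * bb else bb.
Definition Fp LA LO (bits : T -> bool) x y : nat :=
  if bef LA x y then phi (bef LO y x) (bits x) (bits y) else 0.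
Definition Phi s LA LO bits := \sum_(x <- s) \sum_(y <- s) Fp LA LO bits x y.

Lemma pair_ineq (pA pO pA' pO' bz bw : bool) :
  (bz -> pA') -> (~~ bz -> pA' = pA) -> (pO -> pO') ->
  2 * (~~ pA) + ((if pA' then phi (~~ pO') (~~ bz) bw else 0) +
                 (if ~~ pA' then phi pO' bw (~~ bz) else 0)) <=
  5 * (~~ pO) + ((if pA then phi (~~ pO) bz bw else 0) +
                 (if ~~ pA then phi pO bw bz else 0)).
Proof.
case: pA; case: pO; case: pA'; case: pO'; case: bz; case: bw => //= H1 H2 H3;
  first [ done | by case: (H1 isT) | by case: (H2 isT) | by case: (H3 isT) ].
Qed.

Lemma bef_tot L x y : x \in L -> y \in L -> x != y -> bef L y x = ~~ bef L x y.
Proof.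
move=> xL yL xy; rewrite /bef.
have : index x L != index y L.
  apply: contra xy => /eqP E; apply/eqP.
  by rewrite -(nth_index x xL) E nth_index.
lia.
Qed.

Lemma dsum_split s z (F : T -> T -> nat) : uniq s -> z \in s -> F z z = 0 ->
  \sum_(x <- s) \sum_(y <- s) F x y =
  \sum_(x <- s | x != z) \sum_(y <- s | y != z) F x y +
  \sum_(w <- s | w != z) (F z w + F w z).
Proof.
move=> us zs Fzz.
rewrite (bigD1_seq z) //= (@bigD1_seq _ _ _ _ s z (F z)) //= Fzz add0n.
have -> : \sum_(x <- s | x != z) \sum_(y <- s) F x y = \sum_(x <- s | x != z) (F x z + \sum_(y <- s | y != z) F x y).
  by apply: eq_bigr => x _; apply: bigD1_seq.
rewrite !big_split /=; lia.
Qed.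

Lemma sum_le_except (r : seq T) (P : pred T) b (G G' : T -> nat) c : uniq r ->
  (forall w, w != b -> G' w = G w) -> G' b <= c ->
  \sum_(w <- r | P w) G' w <= \sum_(w <- r | P w) G w + c.
Proof.
move=> ur HG Hb; elim: r ur => [|x r IH] /=; first by rewrite !big_nil.
case/andP => xr ur; rewrite !big_cons.
have [Exb | xb] := eqVneq x b.
  have -> : \sum_(w <- r | P w) G' w = \sum_(w <- r | P w) G w.
    rewrite big_seq_cond [RHS]big_seq_cond; apply: eq_bigr => w /andP[wr _].
    by apply: HG; apply/eqP => E; move: xr; rewrite Exb -E wr.
  rewrite Exb; case: (P b); lia.
rewrite HG //; have := IH ur; case: (P x); lia.
Qed.

Lemma Fp_pair LA LO bits a b : Fp LA LO bits a b + Fp LA LO bits b a <= 5.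
Proof.
have H : forall i b1 b2, phi i b1 b2 <= 5 by case; case; case.
rewrite /Fp; case E1: (bef LA a b); case E2: (bef LA b a); rewrite ?add0n ?addn0 //.
move: E1 E2; rewrite /bef; lia.
Qed.

Lemma Phi_swap s LA L bits j : uniq s -> perm_eq L s ->
  Phi s LA (swap_adj L j) bits <= Phi s LA L bits + 5.
Proof.
move=> us pL; have uL : uniq L by rewrite (perm_uniq pL).
case: (swap_adj_dec j uL) => [->|[P [a [b [r [EL ES]]]]]]; first lia.
rewrite ES; move: pL uL; rewrite EL => pL uL.
have [Hb pL'] := swap_bef uL.
have aL : a \in s by rewrite -(perm_mem pL) mem_cat inE eqxx orbT.
have bL : b \in s by rewrite -(perm_mem pL) mem_cat !inE eqxx !orbT.
have ab : a != b by move: uL; rewrite cat_uniq /= inE => /and4P[_ _ /norP[]].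
have F0 : forall L0, Fp LA L0 bits a a = 0 by move=> L0; rewrite /Fp /bef ltnn.
rewrite /Phi !(@dsum_split s a) ?F0 //.
have -> : \sum_(x <- s | x != a) \sum_(y <- s | y != a)
    Fp LA (P ++ [:: b, a & r]) bits x y =
    \sum_(x <- s | x != a) \sum_(y <- s | y != a) Fp LA (P ++ [:: a, b & r]) bits x y.
  apply: eq_bigr => x xa; apply: eq_bigr => y ya.
  by rewrite /Fp Hb // ?(negbTE ya) ?(negbTE xa) ?andbF.
rewrite -addnA leq_add2l.
apply: (@sum_le_except s _ b _ _ 5 us).
  move=> w wb; rewrite /Fp !Hb //;
  by rewrite ?eqxx ?(negbTE wb) ?(negbTE ab) ?andbF ?andbT.
exact: Fp_pair.
Qed.


Lemma swap_perm L j : uniq L -> perm_eq (swap_adj L j) L.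
Proof.
move=> uL; case: (swap_adj_dec j uL) => [->|[P [a [b [r [EL ES]]]]]] //.
by rewrite ES EL; move: uL; rewrite EL => uL; case: (swap_bef uL).
Qed.

Lemma Phi_swaps s LA bits sw : uniq s -> forall L, perm_eq L s ->
  perm_eq (foldl (@swap_adj T) L sw) s /\
  Phi s LA (foldl (@swap_adj T) L sw) bits <= Phi s LA L bits + 5 * size sw.
Proof.
move=> us; elim: sw => [|j sw IH] L pL /=; first by split => //; lia.
have uL : uniq L by rewrite (perm_uniq pL).
have pL1 : perm_eq (swap_adj L j) s by rewrite (perm_trans (swap_perm j uL)).
have [H1 H2] := IH _ pL1; split => //.
have := Phi_swap LA bits j us pL; lia.
Qed.

Lemma Phi_access s LA LO LA' LO' (bits : T -> bool) z : uniq s -> z \in s ->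
  perm_eq LA s -> perm_eq LO s -> perm_eq LA' s -> perm_eq LO' s ->
  (forall x y, x != z -> y != z -> bef LA' x y = bef LA x y) ->
  (forall x y, x != z -> y != z -> bef LO' x y = bef LO x y) ->
  (bits z -> forall w, w != z -> bef LA' z w) ->
  (~~ bits z -> LA' = LA) ->
  (forall w, w != z -> bef LO z w -> bef LO' z w) ->
  2 * index z LA + Phi s LA' LO' (fun y => if y == z then ~~ bits z else bits y)
  <= 5 * index z LO + Phi s LA LO bits.
Proof.
move=> us zs pA pO pA' pO' hA1 hO1 hA2 hA3 hO2.
set bits' := fun y => _.
have uA : uniq LA by rewrite (perm_uniq pA).
have uO : uniq LO by rewrite (perm_uniq pO).
have zA : z \in LA by rewrite (perm_mem pA).
have zO : z \in LO by rewrite (perm_mem pO).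
rewrite (index_sum uA pA zA) (index_sum uO pO zO).
have bzz : forall L, bef L z z = false by move=> L; rewrite /bef ltnn.
rewrite !(@bigD1_seq _ _ _ _ s z) //= !bzz !add0n.
have F0 : forall LA LO bits, Fp LA LO bits z z = 0 by move=> *; rewrite /Fp /bef ltnn.
rewrite /Phi !(@dsum_split s z) ?F0 //.
have -> : \sum_(x <- s | x != z) \sum_(y <- s | y != z) Fp LA' LO' bits' x y =
          \sum_(x <- s | x != z) \sum_(y <- s | y != z) Fp LA LO bits x y.
  apply: eq_bigr => x xz; apply: eq_bigr => y yz.
  by rewrite /Fp hA1 // hO1 // /bits' (negbTE xz) (negbTE yz).
have key : \sum_(w <- s | w != z) (2 * (bef LA w z : nat) + (Fp LA' LO' bits' z w + Fp LA' LO' bits' w z))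
  <= \sum_(w <- s | w != z) (5 * (bef LO w z : nat) + (Fp LA LO bits z w + Fp LA LO bits w z)).
  rewrite big_seq_cond [X in _ <= X]big_seq_cond; apply: leq_sum => w /andP[ws wz].
  have wA : w \in LA by rewrite (perm_mem pA).
  have wO : w \in LO by rewrite (perm_mem pO).
  have wA' : w \in LA' by rewrite (perm_mem pA').
  have wO' : w \in LO' by rewrite (perm_mem pO').
  have zA' : z \in LA' by rewrite (perm_mem pA').
  have zO' : z \in LO' by rewrite (perm_mem pO').
  have zw : z != w by rewrite eq_sym.
  rewrite /Fp !(bef_tot _ _ zw) // /bits' eqxx (negbTE wz).
  apply: pair_ineq.
  - by move=> bz; apply: hA2.
  - by move=> bz; rewrite (hA3 bz).
  - exact: hO2.
rewrite big_split [X in _ <= X]big_split /= -!big_distrr /= in key. lia.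
Qed.


Lemma move_facts L z k : uniq L -> z \in L -> k <= index z L ->
  [/\ perm_eq (move_to z k L) L,
      forall x y, x != z -> y != z -> bef (move_to z k L) x y = bef L x y,
      forall w, w != z -> bef L z w -> bef (move_to z k L) z w &
      k = 0 -> forall w, w != z -> bef (move_to z k L) z w].
Proof.
move=> uL zL kp.
have [L1 [L2 [L3 [EL EM zL1 zL2 sL1]]]] := move_to_dec uL zL kp.
have [H1 H2 H3 H4] := move_bef L3 zL1 zL2.
rewrite EM EL; split => //.
by move=> k0; apply: H3; apply/size0nil; rewrite sL1.
Qed.

Lemma arith_step (m o Q' ia io Q1 Q sw f : nat) :
  2 * m <= 5 * o + Q' -> 2 * ia + Q' <= 5 * io + Q1 -> Q1 <= Q + 5 * sw ->
  2 * (ia + f + m) <= 5 * (sw + (io + f) + o) + Q.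
Proof. lia. Qed.

Lemma main_ineq full (S : nat -> step) s : uniq s ->
  forall sigma t LA LO bits, perm_eq LA s -> perm_eq LO s ->
  all (fun x => x \in s) sigma ->
  2 * mtf2_cost full LA bits sigma <= 5 * off_cost full S t LO sigma + Phi s LA LO bits.
Proof.
move=> us; elim=> [|z sg IH] t LA LO bits pA pO /=; first lia.
case/andP => zs alls.
have [pO1 Hsw] := Phi_swaps LA bits (S t).1 us pO.
set LO1 := foldl (@swap_adj T) LO (S t).1 in pO1 Hsw *.
set k := minn (S t).2 (index z LO1).
have uO1 : uniq LO1 by rewrite (perm_uniq pO1).
have zO1 : z \in LO1 by rewrite (perm_mem pO1).
have uA : uniq LA by rewrite (perm_uniq pA).
have zA : z \in LA by rewrite (perm_mem pA).
have [mO1 mO2 mO3 _] := move_facts uO1 zO1 (geq_minr (S t).2 (index z LO1)).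
have [mA1 mA2 _ mA4] := move_facts uA zA (leq0n (index z LA)).
set LO' := move_to z k LO1 in mO1 mO2 mO3 *.
set LA' := if ~~ bits z then LA else move_to z 0 LA.
have pO' : perm_eq LO' s by apply: perm_trans mO1 pO1.
have pA' : perm_eq LA' s by rewrite /LA'; case: (bits z) => //=; apply: perm_trans mA1 pA.
have acc := @Phi_access s LA LO1 LA' LO' bits z us zs pA pO1 pA' pO'.
have := IH t.+1 LA' LO' (fun y => if y == z then ~~ bits z else bits y) pA' pO' alls.
have := acc.
rewrite /LA'; case: (bits z) => /= acc' IH'.
- have := acc' mA2 mO2 (fun _ => mA4 erefl) ltac:(by []) mO3.
  rewrite /access_cost => h; apply: arith_step; [exact: IH' | exact: h | exact: Hsw].
- have := acc' (fun _ _ _ _ => erefl) mO2 ltac:(by []) (fun _ => erefl) mO3.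
  rewrite /access_cost => h; apply: arith_step; [exact: IH' | exact: h | exact: Hsw].
Qed.

Lemma sum_le_const (r : seq T) (G : T -> nat) c : (forall x, G x <= c) ->
  \sum_(x <- r) G x <= size r * c.
Proof.
move=> H; elim: r => [|x r IH]; first by rewrite big_nil.
by rewrite big_cons /=; have := H x; lia.
Qed.

Lemma Phi_bound s LA LO bits : Phi s LA LO bits <= size s * (size s * 5).
Proof.
apply: sum_le_const => x; apply: sum_le_const => y.
rewrite /Fp; case: (bef _ _ _) => //.
by case: (bef _ _ _); case: (bits x); case: (bits y).
Qed.

End Aux.

Import GRing.Theory Num.Theory.
Local Open Scope ring_scope.

Theorem lemma12 (l : nat) :
  exists b : rat,
    forall (T : eqType) (L0 : seq T) (bits0 : T -> bool) (full : bool)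
           (sigma : seq T),
      size L0 = l -> uniq L0 -> all (fun x => x \in L0) sigma ->
      (mtf2_cost full L0 bits0 sigma)%:R <= (5%:R / 2%:R) * (OPT full L0 sigma)%:R + b.
Proof.
exists ((5 * l * l)%N%:R / 2%:R).
move=> T L0 bits0 full sigma sL uL allL.
have [S HS] : exists S, off_cost full S 0 L0 sigma = OPT full L0 sigma.
  rewrite /OPT; case: ex_minnP => n; rewrite /achievableb.
  by case: excluded_middle_informative => // [[S HS]] _ _; exists S.
have H := @main_ineq T full S L0 uL sigma 0 L0 L0 bits0 (perm_refl _) (perm_refl _) allL.
rewrite HS in H.
have HP := Phi_bound L0 L0 L0 bits0; rewrite sL in HP.
have H2 : (2 * mtf2_cost full L0 bits0 sigma <= 5 * OPT full L0 sigma + 5 * l * l)%N.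
  move: H HP; generalize (Phi L0 L0 L0 bits0) (mtf2_cost full L0 bits0 sigma) (OPT full L0 sigma).
  move=> a b c; lia.
have H3 : ((2 * mtf2_cost full L0 bits0 sigma)%N%:R <= (5 * OPT full L0 sigma + 5 * l * l)%N%:R :> rat).
  by rewrite ler_nat.
rewrite !natrD !natrM in H3.
lra.
Qed.
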